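(* For every integer $n\ge1$, $$\mathrm{He}_{(n,n)}(0)=\begin{cases}\dfrac{(n!)^2}{2^{n-1}\left(\frac{n-1}{2}\right)!^2}, & n\text{ odd},\\[2mm] (n+1)\dfrac{(n!)^2}{2^{n}\left(\frac{n}{2}\right)!^2}, & n\text{ even}.\end{cases}$$ In particular, $\mathrm{He}_{(n,n)}(0)$ is a perfect square $r^2$ ($r\ge1$ an integer) when $n$ is odd, and is of the form $(n+1)r^2$ with $r\ge1$ an integer when $n$ is even.
   Context: $\mathrm{He}_k(x)$ denotes the monic probabilists' Hermite polynomial of degree $k$. For a partition $\lambda=(\lambda_1\ge\dots\ge\lambda_r\ge0)$ the degree sequence is $n_\lambda=(\lambda_r,\lambda_{r-1}+1,\dots,\lambda_1+r-1)$, and $\mathrm{He}_\lambda(x)=\mathrm{Wr}[\mathrm{He}_{n_1},\dots,\mathrm{He}_{n_r}]/\prod_{i<j}(n_j-n_i)$ where $n_\lambda=(n_1,\dots,n_r)$. Thus $\mathrm{He}_{(n,n)}=\mathrm{Wr}[\mathrm{He}_n,\mathrm{He}_{n+1}]$. *)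

(* Defs.v *)
From mathcomp Require Import all_boot all_order all_algebra.
Set Implicit Arguments. Unset Strict Implicit. Unset Printing Implicit Defensive.
Import GRing.Theory Num.Theory.
Local Open Scope ring_scope.

(* Monic probabilists' Hermite polynomials:
   He_0 = 1, He_1 = X, He_{k+2} = X He_{k+1} - (k+1) He_k. *)
Fixpoint He_pair (k : nat) : {poly rat} * {poly rat} :=
  match k with
  | 0%N => (1, 'X)
  | k'.+1 => let (a, b) := He_pair k' in (b, 'X * b - (k'.+1)%:R *: a)
  end.

Definition He (k : nat) : {poly rat} := (He_pair k).1.

Definition Wr2 (f g : {poly rat}) : {poly rat} := f * g^`() - f^`() * g.

(* He_{(n,n)}: degree sequence (n, n+1), normalising product (n+1)-n = 1. *)
Definition He_nn (n : nat) : {poly rat} := Wr2 (He n) (He n.+1).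

(* Main.v *)
Require Import Defs.
From mathcomp Require Import all_boot all_order all_algebra.
From mathcomp Require Import ring.
Import GRing.Theory Num.Theory.
Local Open Scope ring_scope.

Lemma He_pairE k : He_pair k = (He k, He k.+1).
Proof.
elim: k => [//|k IH]. rewrite /He /= IH /=. by [].
Qed.

Lemma HeSS k : He k.+2 = 'X * He k.+1 - k.+1%:R *: He k.
Proof. rewrite {1}/He /=. by case: (He_pair k) (He_pairE k) => a b [-> ->]. Qed.

Lemma He0 : He 0 = 1. Proof. by []. Qed.
Lemma He1 : He 1 = 'X. Proof. by []. Qed.

Lemma He_deriv k : (He k.+1)^`() = k.+1%:R *: He k.
Proof.
suff: (He k.+1)^`() = k.+1%:R *: He k /\ (He k.+2)^`() = k.+2%:R *: He k.+1 by case.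
elim: k => [|k [IH1 IH2]].
  split; first by rewrite He1 derivX He0 scale1r.
  rewrite HeSS He1 He0 derivB derivM derivX derivZ derivC scaler0 subr0.
  rewrite mul1r mulr1 scalerDl scale1r. by [].
split=> //. rewrite HeSS derivB derivM derivZ IH2 derivX mul1r.
rewrite IH1 HeSS.
rewrite -!mul_polyC !polyC_natr. rewrite !mulrS.
ring.
Qed.

Fixpoint g (m : nat) : nat := if m is m'.+1 then (m'.*2.+1 * g m')%N else 1%N.

Lemma g_pos m : (0 < g m)%N.
Proof. elim: m => //= m IH; by rewrite muln_gt0 IH. Qed.

Lemma He_even0 m : (He m.*2).[0] = (-1) ^+ m * (g m)%:R.
Proof.
suff: (He m.*2).[0] = (-1) ^+ m * (g m)%:R /\ (He m.*2.+1).[0] = 0 by case.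
elim: m => [|m [IH1 IH2]]; first by rewrite /= He0 He1 hornerC hornerX expr0 mul1r.
rewrite doubleS !HeSS !(hornerE, IH1, IH2) /= natrM exprS.
split; last by ring.
rewrite -[in RHS]natrM /=. rewrite natrM. ring.
Qed.

Lemma He_odd0 m : (He m.*2.+1).[0] = 0.
Proof.
elim: m => [|m IH]; first by rewrite He1 hornerX.
by rewrite doubleS HeSS !hornerE IH; ring.
Qed.

Lemma fact_double m : (m.*2)`! = (2 ^ m * m`! * g m)%N.
Proof.
elim: m => [//|m IH]. rewrite doubleS !factS IH /= expnS. 
rewrite -!mul2n. ring.
Qed.

Lemma sgn2 m : (-1) ^+ m * (-1) ^+ m = 1 :> rat.
Proof. by rewrite -expr2 sqrr_sign. Qed.

Lemma val_odd m : (He_nn m.*2.+1).[0] = ((g m.+1)%:R) ^+ 2.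
Proof.
rewrite /He_nn /Wr2 He_deriv He_deriv !(hornerD, hornerN, hornerM, hornerZ) He_odd0 -doubleS !He_even0.
have -> : (g m.+1)%:R = (m.*2.+1)%:R * (g m)%:R :> rat by rewrite /= natrM.
rewrite exprS.
transitivity (((-1) ^+ m * (-1) ^+ m) * ((m.*2.+1)%:R * (g m)%:R) ^+ 2 : rat); first ring.
by rewrite sgn2 mul1r.
Qed.

Lemma val_even m : (He_nn m.*2).[0] = (m.*2.+1)%:R * ((g m)%:R) ^+ 2.
Proof.
rewrite /He_nn /Wr2 He_deriv !(hornerD, hornerN, hornerM, hornerZ) He_odd0 !He_even0.
transitivity ((m.*2.+1)%:R * ((-1) ^+ m * (-1) ^+ m) * ((g m)%:R) ^+ 2 : rat); first ring.
by rewrite sgn2 mulr1.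
Qed.

Theorem mainTheorem12 (n : nat) : (1 <= n)%N ->
  ((odd n ->
     (He_nn n).[0] = (n`!%:R ^+ 2) / (2 ^+ n.-1 * ((n.-1)./2)`!%:R ^+ 2)
     /\ exists r : nat, (1 <= r)%N /\ (He_nn n).[0] = (r%:R) ^+ 2)
  /\
  (~~ odd n ->
     (He_nn n).[0] = n.+1%:R * ((n`!%:R ^+ 2) / (2 ^+ n * (n./2)`!%:R ^+ 2))
     /\ exists r : nat, (1 <= r)%N /\ (He_nn n).[0] = n.+1%:R * (r%:R) ^+ 2)).
Proof.
move=> n1; rewrite -(odd_double_half n) in n1 *.
case: (odd n) n1 => /= n1; set m := n./2; rewrite ?odd_double /=; split=> // _.
- rewrite val_odd; split; last by exists (g m.+1); rewrite g_pos.
  rewrite doubleK factS fact_double /= !natrM !natrX -mul2n mulnC exprM.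
  have h1 : (2 : rat) ^+ m != 0 by rewrite expf_neq0.
  have h2 : (m`!)%:R != 0 :> rat by rewrite pnatr_eq0 -lt0n fact_gt0.
  field. by rewrite h1 h2.
- rewrite add0n val_even; split; last by exists (g m); rewrite g_pos.
  rewrite doubleK fact_double /= !natrM !natrX -mul2n mulnC exprM.
  have h1 : (2 : rat) ^+ m != 0 by rewrite expf_neq0.
  have h2 : (m`!)%:R != 0 :> rat by rewrite pnatr_eq0 -lt0n fact_gt0.
  field. by rewrite h1 h2.
Qed.
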